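(* Assume the standing assumptions (i)–(viii) below and let $\delta\in(0,1)$, $T\ge1$. Consider RFedAGS with decaying step sizes $\alpha_{t,k}=\bar\alpha_t$ and batch sizes $B_{t,k}=\bar B_t\in[B_{\mathrm{low}},B_{\mathrm{up}}]$, and let $\tilde K\ge2$ be an integer such that $2-\delta\ge L\bar\alpha_t$ and, for every $K\in\{2,\dots,\tilde K\}$ and every $t$, $1\ge L^2\bar\alpha_t^2M(K+1)(K-2)+\bar\alpha_tLK$ and $1-\delta\ge2L^2\bar\alpha_t^2M$. For $K\in\{1,\dots,\tilde K\}$ define \[ Q_2(K)=\frac{2(F(\tilde x_1)-F(x^* ))}{(K-1+\delta)\sum_{t=1}^T\bar\alpha_t}+\sum_{t=1}^T\frac{\bar\alpha_t^2K\sigma^2L}{(K-1+\delta)\bar B_t\sum_{t=1}^T\bar\alpha_t}\Big(\frac{\bar\alpha_t(2K-1)(K-1)ML}{3}+\frac KS\Big), \] the upper bound on $\mathbb{E}\big[\sum_{t=1}^T\frac{\bar\alpha_t}{\sum_{t=1}^T\bar\alpha_t}\|\mathrm{grad}F(\tilde x_t)\|^2\big]$ obtained when RFedAGS is run with $K$ local steps, and call $K^*\in\arg\min_{K\in\{1,\dots,\tilde K\}}Q_2(K)$ an optimal choice of $K$. If \[ F(\tilde x_1)-F(x^* )>\delta\sigma^2L\sum_{t=1}^T\frac{\bar\alpha_t^2}{\bar B_t}\Big(\bar\alpha_tML+\frac2S\Big), \] then every optimal choice satisfies $K^*>1$.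
   Context: $\mathcal{M}$ is a Riemannian manifold with inner product $\langle\cdot,\cdot\rangle_x$ and norm $\|\cdot\|$ on each tangent space $\mathrm{T}_x\mathcal{M}$; $\mathrm{grad}$ is the Riemannian gradient, $0_x$ the zero of $\mathrm{T}_x\mathcal{M}$. $F(x)=\mathbb{E}_{\xi\sim\mathcal{D}}[f(x;\xi)]$ for a data distribution $\mathcal{D}$; $x^*\in\arg\min_{x\in\mathcal M}F(x)$. $\mathrm{R}$ is a smooth retraction ($\mathrm{R}_x(0_x)=x$, $\mathrm{D}\mathrm{R}_x(0_x)=\mathrm{id}$). A set $\mathcal{W}\subseteq\mathcal{M}$ is totally retractive if there is $r>0$ such that for every $y\in\mathcal{W}$, $\mathcal{W}\subseteq\mathrm{R}_y(\mathbb{B}(0_y,r))$ and $\mathrm{R}_y$ is a diffeomorphism on $\mathbb{B}(0_y,r)$; then $\mathrm{R}_x^{-1}(y)$ is defined for $x,y\in\mathcal{W}$. A vector transport $\Gamma$ associated with $\mathrm{R}$ gives, for $x,y\in\mathcal{W}$, a linear map $\Gamma_x^y:\mathrm{T}_x\mathcal{M}\to\mathrm{T}_y\mathcal{M}$; it is isometric if it preserves inner products. Algorithm RFedAGS (with $S$ agents, $K$ local steps, step sizes $\alpha_{t,k}>0$, batch sizes $B_{t,k}\in\mathbb{N}$, initial point $\tilde x_1$): for $t=1,2,\dots$, for each agent $j$ set $x_{t,0}^j=\tilde x_t$, $\zeta_{t,0}^j=0_{\tilde x_t}$; for $k=1,\dots,K$ agent $j$ draws a mini-batch $\mathcal{B}^j_{t,k-1}$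 of $B_{t,k-1}$ i.i.d. samples $\xi^j_{t,k-1,s}\sim\mathcal{D}$ (independent of all other samples), sets $\eta^j_{k-1}=-\frac{\alpha_{t,k-1}}{B_{t,k-1}}\sum_{s\in\mathcal{B}^j_{t,k-1}}\mathrm{grad}f(x^j_{t,k-1};\xi^j_{t,k-1,s})$, $x^j_{t,k}=\mathrm{R}_{x^j_{t,k-1}}(\eta^j_{k-1})$, $\zeta^j_{t,k}=\zeta^j_{t,k-1}+\Gamma_{x^j_{t,k-1}}^{\tilde x_t}(\eta^j_{k-1})$; then $\tilde x_{t+1}=\mathrm{R}_{\tilde x_t}\big(\frac1S\sum_{j}\zeta^j_{t,K}\big)$. $\mathbb{E}$ denotes total expectation. Standing assumptions: (i) $x^*$, all $\tilde x_t$ and all $x^j_{t,k}$ lie in a compact connected set $\mathcal{W}$ totally retractive w.r.t. $\mathrm{R}$; (ii) each $f(\cdot;\xi)$ is continuously differentiable; (iii) $\Gamma$ is isometric; (iv) $F$ is $L$-retraction-smooth on $\mathcal{W}$ ($F(\mathrm{R}_x(\eta))\le F(x)+\langle\mathrm{grad}F(x),\eta\rangle+\frac L2\|\eta\|^2$ for $x\in\mathcal{W}$, $\mathrm{R}_x(\eta)\in\mathcal{W}$) and $L$-Lipschitz continuously differentiable w.r.t. $\Gamma$ on $\mathcal{W}$ ($\|\Gamma_x^y(\mathrm{grad}F(x))-\mathrm{grad}F(y)\|\le L\|\eta\|$ whenever $x\in\mathcal{W}$, $y=\mathrm{R}_x(\eta)\in\mathcal{W}$); (v) $\alpha_{t,k}\le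 A$ for all $t,k$; (vi) $\mathbb{E}_\xi[\mathrm{grad}f(x;\xi)]=\mathrm{grad}F(x)$; (vii) there is $\sigma>0$ with $\mathbb{E}\|\frac1B\sum_s\mathrm{grad}f(x;\xi_s)-\mathrm{grad}F(x)\|^2\le\sigma^2/B$ for every $x\in\mathcal{W}$ and every mini-batch of $B$ i.i.d. samples; (viii) there is $C_1>0$ with $\|\mathrm{grad}f(x;\xi)\|\le C_1$ for all $x\in\mathcal{W}$ and all $\xi$. Constant $M$: with $P_{x,y}=\mathrm{R}_y^{-1}\circ\mathrm{R}_x$ for $x,y\in\mathcal{W}$, $C_2,C_3>0$ are constants (uniform bounds on the first and second derivatives of $P_{x,y}$ on its compact domain) such that for all $x,y\in\mathcal{W}$ and $\eta\in\mathrm{T}_x\mathcal{M}$ with $\mathrm{R}_x(\eta)\in\mathcal{W}$: $\|\mathrm{D}P_{x,y}(0_x)\|_{\mathrm{op}}\le C_2$ and $\|P_{x,y}(\eta)-P_{x,y}(0_x)-\mathrm{D}P_{x,y}(0_x)[\eta]\|\le C_3\|\eta\|^2$. Then $M=C_2^2+A^2C_1^2C_3^2$. *)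

(* Defs.v *)
From HB Require Import structures.
From mathcomp Require Import all_boot all_order all_algebra.
From mathcomp Require Import reals.
Set Implicit Arguments. Unset Strict Implicit. Unset Printing Implicit Defensive.
Import Order.TTheory GRing.Theory Num.Theory.
Local Open Scope ring_scope.

Definition Mconst (R : realType) (A C1 C2 C3 : R) : R :=
  C2 ^+ 2 + A ^+ 2 * C1 ^+ 2 * C3 ^+ 2.

(* Q_2(K): the bound on E[ sum_t alpha_t / (sum alpha) ||grad F(x_t)||^2 ]
   for RFedAGS with K local steps; D stands for F(x~_1) - F(x^* ).
   Time index t ranges over 1..T. *)
Definition Q2 (R : realType) (D L M sigma delta : R) (S T : nat)
    (alpha : nat -> R) (B : nat -> nat) (K : nat) : R :=
  let sa := \sum_(1 <= t < T.+1) alpha t in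
  2 * D / ((K%:R - 1 + delta) * sa)
  + \sum_(1 <= t < T.+1)
      (alpha t ^+ 2 * K%:R * sigma ^+ 2 * L
         / ((K%:R - 1 + delta) * (B t)%:R * sa)
       * (alpha t * (2 * K%:R - 1) * (K%:R - 1) * M * L / 3 + K%:R / S%:R)).

(* Main.v *)
Require Import Defs.
From HB Require Import structures.
From mathcomp Require Import all_boot all_order all_algebra.
From mathcomp Require Import reals.
From mathcomp Require Import ring lra.
Import Order.TTheory GRing.Theory Num.Theory.
Local Open Scope ring_scope.
Theorem theorem7 (R : realType) (X : Type) (F : X -> R) (x1 xstar : X)
    (L sigma A C1 C2 C3 delta : R) (S T Blow Bup Ktilde : nat)
    (alpha : nat -> R) (B : nat -> nat)
    (* x^* minimizes F *)
    (Hxstar : forall x, F xstar <= F x)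
    (HL : 0 < L) (Hsigma : 0 < sigma) (HA : 0 < A)
    (HC1 : 0 < C1) (HC2 : 0 < C2) (HC3 : 0 < C3)
    (Hdelta : 0 < delta < 1) (HT : (1 <= T)%N) (HS : (1 <= S)%N)
    (Hblow : (1 <= Blow)%N)
    (Halpha : forall t, (1 <= t)%N -> 0 < alpha t <= A)
    (HB : forall t, (1 <= t)%N -> (Blow <= B t <= Bup)%N)
    (HK : (2 <= Ktilde)%N)
    (Hstep1 : forall t, (1 <= t)%N -> L * alpha t <= 2 - delta)
    (Hstep2 : forall t K, (1 <= t)%N -> (2 <= K <= Ktilde)%N ->
       L ^+ 2 * alpha t ^+ 2 * Mconst A C1 C2 C3 * (K%:R + 1) * (K%:R - 2)
         + alpha t * L * K%:R <= 1)
    (Hstep3 : forall t, (1 <= t)%N ->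
       2 * L ^+ 2 * alpha t ^+ 2 * Mconst A C1 C2 C3 <= 1 - delta)
    (Hgap : F x1 - F xstar >
       delta * sigma ^+ 2 * L *
       \sum_(1 <= t < T.+1) (alpha t ^+ 2 / (B t)%:R
                  * (alpha t * Mconst A C1 C2 C3 * L + 2 / S%:R)))
    (Kstar : nat) (HKs : (1 <= Kstar <= Ktilde)%N)
    (Hmin : forall K, (1 <= K <= Ktilde)%N ->
       Q2 (F x1 - F xstar) L (Mconst A C1 C2 C3) sigma delta S T alpha B Kstar
       <= Q2 (F x1 - F xstar) L (Mconst A C1 C2 C3) sigma delta S T alpha B K) :
  (1 < Kstar)%N.
Proof.
rewrite ltn_neqAle andbC.
case/andP: HKs => HK1 _; rewrite HK1 /=.
apply/negP => /eqP HK1e; subst Kstar.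
have := Hmin 2%N; rewrite HK => /(_ isT).
set D := F x1 - F xstar.
set M := Mconst A C1 C2 C3.
set sa := \sum_(1 <= t < T.+1) alpha t.
have Bpos : forall t, (1 <= t)%N -> 0 < (B t)%:R :> R.
  move=> t ht; rewrite ltr0n; case/andP: (HB t ht) => h _.
  exact: leq_trans Hblow h.
have sapos : 0 < sa.
  rewrite /sa big_nat_recl // ; apply: ltr_pwDl.
    by case/andP: (Halpha 1%N isT).
  rewrite sumr_ge0 // => i _; case/andP: (Halpha i.+1 isT) => h _; exact: ltW.
case/andP: Hdelta => d0 d1.
set s1 := \sum_(1 <= t < T.+1) (alpha t ^+ 2 / (B t)%:R * (1 / S%:R)).
set s2 := \sum_(1 <= t < T.+1) (alpha t ^+ 2 / (B t)%:R * (alpha t * M * L + 2 / S%:R)).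
have s1ge : 0 <= s1.
  rewrite /s1 big_nat_cond sumr_ge0 // => i /andP [/andP [hi _] _].
  have := Bpos i hi; have := Halpha i hi; case/andP=> a0 _ b0.
  apply: mulr_ge0; first by apply: divr_ge0; [exact: sqr_ge0 | exact: ltW].
  by apply: divr_ge0 => //; rewrite ler0n.
have Q1 : Q2 D L M sigma delta S T alpha B 1 * (delta * sa) = 2 * D + sigma ^+ 2 * L * s1.
  rewrite /Q2 -/sa mulrDl mulr_suml /s1 mulr_sumr; congr (_ + _).
    by field; apply/andP; split; apply/lt0r_neq0 => //.
  rewrite big_nat_cond [in RHS]big_nat_cond; apply: eq_bigr => i /andP [/andP [hi _] _].
  have := Bpos i hi => b0.
  field; rewrite ?(lt0r_neq0 b0) ?(lt0r_neq0 sapos) ?(lt0r_neq0 d0) /=.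
  by rewrite andbT pnatr_eq0 -lt0n.
have Q22 : Q2 D L M sigma delta S T alpha B 2 * ((1 + delta) * sa) = 2 * D + 2 * (sigma ^+ 2 * L * s2).
  have d1p : 0 < 1 + delta by lra.
  rewrite /Q2 -/sa mulrDl mulr_suml /s2 (@mulr_sumr _ _ _ _ _ (sigma ^+ 2 * L)) (@mulr_sumr _ _ _ _ _ 2); congr (_ + _).
    field; apply/andP; split; apply/lt0r_neq0 => //; lra.
  rewrite big_nat_cond [in RHS]big_nat_cond; apply: eq_bigr => i /andP [/andP [hi _] _].
  have := Bpos i hi => b0.
  field; rewrite ?(lt0r_neq0 b0) ?(lt0r_neq0 sapos) /=.
  rewrite pnatr_eq0 -lt0n HS /=; apply/lt0r_neq0; lra.
move=> H.
have d1p : 0 < 1 + delta by lra.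
have e1 : Q2 D L M sigma delta S T alpha B 1 = (2 * D + sigma ^+ 2 * L * s1) / (delta * sa).
  by rewrite -Q1 mulrK // unitfE; apply/lt0r_neq0; apply: mulr_gt0.
have e2 : Q2 D L M sigma delta S T alpha B 2 = (2 * D + 2 * (sigma ^+ 2 * L * s2)) / ((1 + delta) * sa).
  by rewrite -Q22 mulrK // unitfE; apply/lt0r_neq0; apply: mulr_gt0.
move: H; rewrite e1 e2 ler_pdivrMr ?mulr_gt0 // [X in _ <= X]mulrAC ler_pdivlMr ?mulr_gt0 //.
have sL : 0 < sigma ^+ 2 * L by apply: mulr_gt0 => //; exact: exprn_gt0.
have g : delta * (sigma ^+ 2 * L * s2) < D by move: Hgap; rewrite -/M -/D -/s2; lra.
have p1 : 0 <= sigma ^+ 2 * L * s1 by apply: mulr_ge0 => //; exact: ltW.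
set P := sigma ^+ 2 * L * s1 in p1 *; set Q := sigma ^+ 2 * L * s2 in g *.
move=> H.
have pos : 0 < sa * ((2 * D + P) * (1 + delta) - (2 * D + 2 * Q) * delta).
  apply: mulr_gt0 => //; nra.
have E : (2 * D + P) * ((1 + delta) * sa) - (2 * D + 2 * Q) * (delta * sa)
  = sa * ((2 * D + P) * (1 + delta) - (2 * D + 2 * Q) * delta) by ring.
lra.
Qed.
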